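(* Let $\mathfrak g=\mathfrak w_6$ be the real Lie algebra with basis $X_1,X_2,X_3,X_4,Z_1,Z_2$ whose only nonzero brackets (up to antisymmetry) are $[X_1,X_3]=-\frac12Z_1$, $[X_1,X_4]=-\frac12Z_2$, $[X_2,X_3]=-\frac12Z_2$, $[X_2,X_4]=\frac12Z_1$, with the abelian complex structure $J_1$ given by $J_1X_1=X_2$, $J_1X_3=-X_4$, $J_1Z_1=-Z_2$. Let $X=\Gamma\backslash W_6$ for a co-compact lattice $\Gamma$ in the corresponding simply connected group. With $T_1=X_1-iX_2$, $T_2=X_3+iX_4$, $W=Z_1+iZ_2$ (so $[\overline T_1,T_2]=-W$, $[\overline T_2,T_1]=\overline W$, and all other brackets among $T_1,T_2,W$ and their conjugates vanish) and dual $(1,0)$-forms $\omega^1,\omega^2,\omega^3$, write $\mu=\sum_{a,b=1}^3\mu^a_b\,\overline\omega^b\otimes e_a$ with $(e_1,e_2,e_3)=(T_1,T_2,W)$. Then: (i) $\mu$ is $\overline\partial$-closed iff $\mu^2_2=\mu^2_3=0$, and $\dim_{\mathbb C}H^1(X,\Theta_X)=6$, with harmonic representatives those closed $\mu$ with additionally $\mu^3_1=0$; (ii) a closed $\mu$ satisfies Condition A iff $\mu^1_1=\mu^1_3=0$, so the abelian deformations form a 4-dimensional subspace of $H^1(X,\Theta_X)$; (iii) for a harmonic $\mu$ the second Kuranishi term is $\phi_2=\mu^1_1\mu^3_3\,\overline\omega^2\otimes T_2$, and the deformation is integrable iff $\mu^1_3=0$, so the Kuranishi space has dimension 5.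
   Context: Condition A for $\mu$ (with $n=2$ indices $j,k\in\{1,2\}$ for $T_1,T_2$ and one central index for $W$): writing $[\overline T_k,T_j]=E_{kj}W+F_{kj}\overline W$, Condition A is $\sum_i(\mu^i_jF_{ki}-\mu^i_kF_{ji})=0$ for all $j,k\in\{1,2\}$ and $\sum_i\mu^i_3F_{ji}=0$ for all $j$, where $i$ ranges over $\{1,2\}$. The operator $\overline\partial$ on $\mathfrak g^{*(0,1)}\otimes\mathfrak g^{1,0}$ is given by $\overline\partial V=\sum_p\overline\omega^p\otimes[\overline e_p,V]^{1,0}$ for $V\in\mathfrak g^{1,0}$, $\overline\partial\overline\sigma=(d\overline\sigma)^{(0,2)}$ (which vanishes here), and $\overline\partial(\overline\sigma\otimes V)=\overline\partial\overline\sigma\otimes V-\overline\sigma\wedge\overline\partial V$; $H^1(X,\Theta_X)\cong\ker\overline\partial_1/\operatorname{im}\overline\partial_0$ computed on invariant elements, harmonic representatives being the orthogonal complement of $\operatorname{im}\overline\partial_0$ in $\ker\overline\partial_1$ for the Hermitian inner product making $\{\overline\omega^b\otimes e_a\}$ orthogonal. The Kuranishi series is $\phi_1=\mu$, $\phi_r=\frac12\sum_{s<r}\overline\partial^*\mathcal G\{\phi_s,\phi_{r-s}\}$ with $\{\cdot,\cdot\}$ the Schouten–Nijenhuis bracket; the Kuranishi space is the locus of harmonic $\mu$ near $0$ for which the resulting $\Phi=\sum\phi_r$ satisfies $\overline\partial\Phi+\frac12\{\Phi,\Phi\}=0$. *)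

(* Defs.v *)
From HB Require Import structures.
From mathcomp Require Import all_boot all_order all_algebra.
From mathcomp Require Import all_classical all_reals all_analysis.

Set Implicit Arguments.
Unset Strict Implicit.
Unset Printing Implicit Defensive.

Import Order.TTheory GRing.Theory Num.Theory.
Import numFieldNormedType.Exports.
Local Open Scope classical_set_scope.
Local Open Scope ring_scope.

(* Setting.  C is the field of complex numbers (we work over an arbitrary     *)
(* numClosedFieldType, i.e. an algebraically closed field with conjugation    *)
(* z^* and imaginary unit 'i, of which the complex numbers are an instance).  *)
(* Everything is computed on left-invariant objects, i.e. at the level of the *)
(* Lie algebra g = w_6.                                        *)

Section W6.
Variable C : numClosedFieldType.

Definition o0 : 'I_3 := @Ordinal 3 0 isT.
Definition o1 : 'I_3 := @Ordinal 3 1 isT.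
Definition o2 : 'I_3 := @Ordinal 3 2 isT.

Definition ev n (i : 'I_n) : 'rV[C]_n := delta_mx 0 i.

(* basis indices: 0,1,2,3 = X1,X2,X3,X4 ; 4,5 = Z1,Z2 (coordinates in C^6)   *)
Definition w6br0 (i j : 'I_6) : 'rV[C]_6 :=
  let Z1 := ev (@Ordinal 6 4 isT) in
  let Z2 := ev (@Ordinal 6 5 isT) in
  if (i == 0 :> nat) && (j == 2 :> nat) then - 2^-1 *: Z1
  else if (i == 0 :> nat) && (j == 3 :> nat) then - 2^-1 *: Z2
  else if (i == 1 :> nat) && (j == 2 :> nat) then - 2^-1 *: Z2
  else if (i == 1 :> nat) && (j == 3 :> nat) then 2^-1 *: Z1
  else 0.

Definition w6br (i j : 'I_6) : 'rV[C]_6 := w6br0 i j - w6br0 j i.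

Definition lieC (u v : 'rV[C]_6) : 'rV[C]_6 :=
  \sum_(i < 6) \sum_(j < 6) (u 0 i * v 0 j) *: w6br i j.

Definition T1 : 'rV[C]_6 := ev (@Ordinal 6 0 isT) - 'i *: ev (@Ordinal 6 1 isT).
Definition T2 : 'rV[C]_6 := ev (@Ordinal 6 2 isT) + 'i *: ev (@Ordinal 6 3 isT).
Definition Wv : 'rV[C]_6 := ev (@Ordinal 6 4 isT) + 'i *: ev (@Ordinal 6 5 isT).

(* rows e_1,e_2,e_3 = T1,T2,W (a basis of g^{1,0} for J_1) *)
Definition F10 : 'M[C]_(3, 6) :=
  \matrix_(a < 3) (if a == o0 then T1 else if a == o1 then T2 else Wv).

Definition Fr : 'M[C]_6 := @col_mx C 3 3 6 F10 (map_mx (fun z => z^*) F10).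

(* Lie bracket in frame coordinates x, y : 'rV_6, i.e. the vector            *)
(* sum_p x_p f_p with (f_0..f_5) = (e_1,e_2,e_3,conj e_1,conj e_2,conj e_3). *)
Definition brk (x y : 'rV[C]_6) : 'rV[C]_6 :=
  lieC (x *m Fr) (y *m Fr) *m invmx Fr.

Definition emb10 (v : 'rV[C]_3) : 'rV[C]_6 := @row_mx C 1 3 3 v 0.
Definition emb01 (v : 'rV[C]_3) : 'rV[C]_6 := @row_mx C 1 3 3 0 v.
Definition pr10 (x : 'rV[C]_6) : 'rV[C]_3 := @lsubmx C 1 3 3 x.
Definition pr01 (x : 'rV[C]_6) : 'rV[C]_3 := @rsubmx C 1 3 3 x.

Definition act (x v : 'rV[C]_3) : 'rV[C]_3 := pr10 (brk (emb01 x) (emb10 v)).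
Definition br01 (x y : 'rV[C]_3) : 'rV[C]_3 := pr01 (brk (emb01 x) (emb01 y)).

(* q = 0 : v : 'rV_3, the vector sum_a v_a e_a.                               *)
(* q = 1 : mu : 'M_3, the form sum_{a,b} mu a b  conj(omega^b) (x) e_a        *)
(*         (so mu a b = mu^a_b : row = index of e_a, column = form index).    *)
(* q = 2 : psi : 'M_3, the form sum_{a,k} psi a k (conj(om^p_k) /\ conj(om^q_k)) (x) e_a *)
(*         where (p_k,q_k) = (0,1),(0,2),(1,2) for k = 0,1,2.                 *)
(* q = 3 : chi : 'rV_3, the form sum_a chi_a conj(om^0/\om^1/\om^2) (x) e_a.  *)
Definition pp (k : 'I_3) : 'I_3 := if k == o2 then o1 else o0.
Definition qq (k : 'I_3) : 'I_3 := if k == o0 then o1 else o2.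

Definition ev1 (mu : 'M[C]_3) (x : 'rV[C]_3) : 'rV[C]_3 := x *m mu^T.
Definition ev2 (psi : 'M[C]_3) (x y : 'rV[C]_3) : 'rV[C]_3 :=
  \sum_(k < 3) (x 0 (pp k) * y 0 (qq k) - x 0 (qq k) * y 0 (pp k)) *: (col k psi)^T.

Definition mk2 (f : 'rV[C]_3 -> 'rV[C]_3 -> 'rV[C]_3) : 'M[C]_3 :=
  \matrix_(a, k) (f (ev (pp k)) (ev (qq k))) 0 a.

(* dbar : Chevalley-Eilenberg differential of g^{0,1} with coefficients in  *)
(* the module g^{1,0}, Xbar . V = [Xbar,V]^{1,0}.                            *)
Definition dbar0 (v : 'rV[C]_3) : 'M[C]_3 := \matrix_(a, b) (act (ev b) v) 0 a.

Definition dbar1 (mu : 'M[C]_3) : 'M[C]_3 :=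
  mk2 (fun x y => act x (ev1 mu y) - act y (ev1 mu x) - ev1 mu (br01 x y)).

Definition dbar2 (psi : 'M[C]_3) : 'rV[C]_3 :=
  let x0 := ev o0 in let x1 := ev o1 in let x2 := ev o2 in
  act x0 (ev2 psi x1 x2) - act x1 (ev2 psi x0 x2) + act x2 (ev2 psi x0 x1)
  - ev2 psi (br01 x0 x1) x2 + ev2 psi (br01 x0 x2) x1 - ev2 psi (br01 x1 x2) x0.

(* Hermitian inner products for which the above bases are orthonormal *)
Definition ipM m n (u v : 'M[C]_(m, n)) : C :=
  \sum_(i < m) \sum_(j < n) u i j * (v i j)^*.

(* adjoints (formal adjoints w.r.t. ipM, computed in orthonormal bases) *)
Definition dbar1star (psi : 'M[C]_3) : 'M[C]_3 :=
  \matrix_(a, b) ipM psi (dbar1 (delta_mx a b)).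
Definition dbar2star (chi : 'rV[C]_3) : 'M[C]_3 :=
  \matrix_(a, k) ipM chi (dbar2 (delta_mx a k)).

Definition lap2 (psi : 'M[C]_3) : 'M[C]_3 :=
  dbar1 (dbar1star psi) + dbar2star (dbar2 psi).

Definition green (G : 'M[C]_3 -> 'M[C]_3) : Prop :=
  forall psi, (forall h, lap2 h = 0 -> ipM (G psi) h = 0) /\
              lap2 (psi - lap2 (G psi)) = 0.

Definition harm_rep (mu : 'M[C]_3) : Prop :=
  dbar1 mu = 0 /\ forall v, ipM mu (dbar0 v) = 0.

Definition sn (phi psi : 'M[C]_3) : 'M[C]_3 :=
  mk2 (fun x y =>
    pr10 (brk (emb10 (ev1 phi x)) (emb10 (ev1 psi y)))
  + pr10 (brk (emb10 (ev1 psi x)) (emb10 (ev1 phi y)))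
  - ev1 phi (pr01 (brk (emb01 x) (emb10 (ev1 psi y)))
             + pr01 (brk (emb10 (ev1 psi x)) (emb01 y)))
  - ev1 psi (pr01 (brk (emb01 x) (emb10 (ev1 phi y)))
             + pr01 (brk (emb10 (ev1 phi x)) (emb01 y)))).

(* Kuranishi series: phi_1 = mu,                                             *)
(*   phi_r = - 1/2 sum_{s=1}^{r-1} dbar^* G {phi_s, phi_{r-s}}               *)
Definition kur_next (G : 'M[C]_3 -> 'M[C]_3) (l : seq 'M[C]_3) : 'M[C]_3 :=
  - 2^-1 *: dbar1star (G (\sum_(i < size l)
                            sn (nth 0 l i) (nth 0 l (size l - 1 - i)))).

Fixpoint kurs (G : 'M[C]_3 -> 'M[C]_3) (mu : 'M[C]_3) (n : nat) : seq 'M[C]_3 :=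
  match n with
  | 0 => [::]
  | n'.+1 => if n' is 0 then [:: mu]
             else rcons (kurs G mu n') (kur_next G (kurs G mu n'))
  end.

(* phi_r (phi_0 = 0) *)
Definition kur (G : 'M[C]_3 -> 'M[C]_3) (mu : 'M[C]_3) (r : nat) : 'M[C]_3 :=
  nth 0 (kurs G mu r) r.-1.

Definition kur_integrable (G : 'M[C]_3 -> 'M[C]_3) (mu : 'M[C]_3) : Prop :=
  exists Phi : 'M[C]_3,
    (forall a b, (fun N : nat => \sum_(1 <= r < N) kur G mu r a b) @ \oo --> Phi a b)
    /\ dbar1 Phi + 2^-1 *: sn Phi Phi = 0.

(* [conj T_k, T_j] = E_kj W + F_kj conj W ;  Fc k j = F_kj (k,j in {0,1})    *)
Definition Fc (k j : 'I_3) : C := (brk (emb01 (ev k)) (emb10 (ev j))) 0 (@Ordinal 6 5 isT).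

Definition condA_mx (mu : 'M[C]_3) : 'M[C]_3 :=
  \matrix_(j, k)
    (if (j < 2)%N && (k < 2)%N then
       \sum_(i < 3 | (i < 2)%N) (mu i j * Fc k i - mu i k * Fc j i)
     else if (j < 2)%N && (k == o2) then
       \sum_(i < 3 | (i < 2)%N) mu i o2 * Fc j i
     else 0).

Definition condA (mu : 'M[C]_3) : Prop := condA_mx mu = 0.

End W6.

(* Main.v *)
Require Import Defs.
From HB Require Import structures.
From mathcomp Require Import all_boot all_order all_algebra.
From mathcomp Require Import all_classical all_reals all_analysis.
From mathcomp Require Import ring.
Import Order.TTheory GRing.Theory Num.Theory.
Import numFieldNormedType.Exports.
Local Open Scope ring_scope.
Section S.
Variable C : numClosedFieldType.
Notation i0 := (@Ordinal 6 0 isT).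
Notation i1 := (@Ordinal 6 1 isT).
Notation i2 := (@Ordinal 6 2 isT).
Notation i3 := (@Ordinal 6 3 isT).
Notation i4 := (@Ordinal 6 4 isT).
Notation i5 := (@Ordinal 6 5 isT).

Lemma sum6E (V : zmodType) (F : 'I_6 -> V) :
  \sum_(i<6) F i = F i0 + F i1 + F i2 + F i3 + F i4 + F i5.
Proof.
rewrite !big_ord_recl big_ord0 addr0 !addrA.
by congr (_+_+_+_+_+_); congr F; apply/val_inj.
Qed.

Lemma lieCE (u v : 'rV[C]_6) : lieC u v =
  (- 2^-1 * (u 0 i0 * v 0 i2 - u 0 i2 * v 0 i0 - u 0 i1 * v 0 i3 + u 0 i3 * v 0 i1)) *: (@ev C 6 i4)
+ (- 2^-1 * (u 0 i0 * v 0 i3 - u 0 i3 * v 0 i0 + u 0 i1 * v 0 i2 - u 0 i2 * v 0 i1)) *: (@ev C 6 i5).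
Proof.
apply/rowP => l.
rewrite /lieC !sum6E /w6br /w6br0 /= !mxE.
case: l => [[|[|[|[|[|[|//]]]]]] Hl] /=; rewrite ?mxE /=.
all: ring.
Qed.
Definition frtab (p j : nat) : C :=
  match p, j with
  | 0, 0 => 1 | 0, 1 => - 'i
  | 1, 2 => 1 | 1, 3 => 'i
  | 2, 4 => 1 | 2, 5 => 'i
  | 3, 0 => 1 | 3, 1 => 'i
  | 4, 2 => 1 | 4, 3 => - 'i
  | 5, 4 => 1 | 5, 5 => - 'i
  | _, _ => 0 end.

Lemma FrE : Fr C = \matrix_(p, j) frtab p j.
Proof.
apply/matrixP => p j; rewrite /Fr !mxE.
case: splitP => k hk; rewrite hk ?mxE;
case: k hk => [[|[|[|//]]] Hk] hk /=; rewrite /= !mxE;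
case: j => [[|[|[|[|[|[|//]]]]]] Hj] /=; rewrite ?mxE /=;
rewrite ?rmorphD ?rmorphN ?rmorphM ?conjCi ?rmorph1 ?rmorph0 /=;
rewrite ?conjCi ?conjC1 ?conjC0 ?rmorph1 /=; try done; try (field: (@sqrCi C)); try done.
Qed.
Definition mtab (j p : nat) : C :=
  match j, p with
  | 0, 0 => 2^-1 | 0, 3 => 2^-1
  | 1, 0 => 'i / 2 | 1, 3 => - ('i / 2)
  | 2, 1 => 2^-1 | 2, 4 => 2^-1
  | 3, 1 => - ('i / 2) | 3, 4 => 'i / 2
  | 4, 2 => 2^-1 | 4, 5 => 2^-1
  | 5, 2 => - ('i / 2) | 5, 5 => 'i / 2
  | _, _ => 0 end.

Lemma MFr : (\matrix_(j, p) mtab j p) *m Fr C = 1%:M.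
Proof.
rewrite FrE; apply/matrixP => j k; rewrite !mxE sum6E !mxE.
case: j => [[|[|[|[|[|[|//]]]]]] Hj]; case: k => [[|[|[|[|[|[|//]]]]]] Hk] /=;
try done; try (field: (@sqrCi C)); try done.
Qed.

Lemma Fr_unit : Fr C \in unitmx.
Proof. by case: (mulmx1_unit MFr). Qed.

Lemma rm0 (a b : 'rV[C]_3) : row_mx a b 0 i0 = a 0 (@o0). Proof. by rewrite (_ : i0 = lshift 3 (@o0)) ?row_mxEl //; apply/val_inj. Qed.
Lemma rm1 (a b : 'rV[C]_3) : row_mx a b 0 i1 = a 0 (@o1). Proof. by rewrite (_ : i1 = lshift 3 (@o1)) ?row_mxEl //; apply/val_inj. Qed.
Lemma rm2 (a b : 'rV[C]_3) : row_mx a b 0 i2 = a 0 (@o2). Proof. by rewrite (_ : i2 = lshift 3 (@o2)) ?row_mxEl //; apply/val_inj. Qed.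
Lemma rm3 (a b : 'rV[C]_3) : row_mx a b 0 i3 = b 0 (@o0). Proof. by rewrite (_ : i3 = rshift 3 (@o0)) ?row_mxEr //; apply/val_inj. Qed.
Lemma rm4 (a b : 'rV[C]_3) : row_mx a b 0 i4 = b 0 (@o1). Proof. by rewrite (_ : i4 = rshift 3 (@o1)) ?row_mxEr //; apply/val_inj. Qed.
Lemma rm5 (a b : 'rV[C]_3) : row_mx a b 0 i5 = b 0 (@o2). Proof. by rewrite (_ : i5 = rshift 3 (@o2)) ?row_mxEr //; apply/val_inj. Qed.

Definition rmt (a b : 'rV[C]_3) (k : nat) : C :=
  match k with 0 => a 0 o0 | 1 => a 0 o1 | 2 => a 0 o2 | 3 => b 0 o0 | 4 => b 0 o1 | _ => b 0 o2 end.
Lemma rmE (a b : 'rV[C]_3) : row_mx a b = \row_(k < 6) rmt a b k.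
Proof.
apply/rowP => k; rewrite [RHS]mxE.
case: k => [[|[|[|[|[|[|//]]]]]] Hk] /=.
by rewrite -(rm0 a b); congr (row_mx a b 0 _); apply/val_inj.
by rewrite -(rm1 a b); congr (row_mx a b 0 _); apply/val_inj.
by rewrite -(rm2 a b); congr (row_mx a b 0 _); apply/val_inj.
by rewrite -(rm3 a b); congr (row_mx a b 0 _); apply/val_inj.
by rewrite -(rm4 a b); congr (row_mx a b 0 _); apply/val_inj.
by rewrite -(rm5 a b); congr (row_mx a b 0 _); apply/val_inj.
Qed.

Lemma brkE (a b c d : 'rV[C]_3) : brk (row_mx a b) (row_mx c d) =
  row_mx ((a 0 o1 * d 0 o0 - b 0 o0 * c 0 o1) *: ev C o2)
         ((b 0 o1 * c 0 o0 - a 0 o0 * d 0 o1) *: ev C o2).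
Proof.
set z := (X in _ = X).
suff H : lieC (row_mx a b *m Fr C) (row_mx c d *m Fr C) = z *m Fr C.
  by rewrite /brk H -mulmxA mulmxV ?Fr_unit // mulmx1.
rewrite lieCE FrE /z !rmE; apply/rowP => k; rewrite !mxE !sum6E !mxE /=.
case: k => [[|[|[|[|[|[|//]]]]]] Hk] /=; rewrite /ev ?mxE /=;
try done; try (field: (@sqrCi C)); try done.
Qed.
End S.
Section V.
Variable C : numClosedFieldType.

Definition dl (p : 'I_3 * 'I_3) : 'M[C]_3 := delta_mx p.1 p.2.

Lemma span_dl_mem (s : seq ('I_3 * 'I_3)) (mu : 'M[C]_3) :
  uniq s ->
  (mu \in <<map dl s>>%VS <-> forall a b, (a, b) \notin s -> mu a b = 0).
Proof.
elim: s mu => [|p s IH] mu /=.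
  move=> _; rewrite span_nil memv0; split.
    by move/eqP=> -> a b _; rewrite mxE.
  by move=> H; apply/eqP/matrixP => a b; rewrite mxE H.
case/andP => pns us; rewrite span_cons; split.
  case/memv_addP => u /vlineP [k ->] [v /(IH v us) Hv ->] a b.
  rewrite in_cons negb_or => /andP [Hp Hs].
  rewrite !mxE Hv // /dl.
  case: p Hp {pns} => p1 p2 /= Hp.
  have: ~~ ((a == p1) && (b == p2)).
    by apply: contra Hp => /andP [/eqP -> /eqP ->].
  by move/negbTE => ->; rewrite mulr0 addr0.
move=> H; apply/memv_addP; exists (mu p.1 p.2 *: dl p).
  by apply/vlineP; exists (mu p.1 p.2).
exists (mu - mu p.1 p.2 *: dl p); last by rewrite addrC subrK.
apply/(IH _ us) => a b Hab.
rewrite !mxE /dl.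
case: (boolP ((a, b) == p)) => [/eqP Ep | Np].
  by rewrite -Ep /= !eqxx mulr1 subrr.
have -> : (a == p.1) && (b == p.2) = false.
  apply/negbTE; apply: contra Np => /andP [/eqP -> /eqP ->].
  by case: p {pns H Hab}.
rewrite mulr0 subr0; apply: H.
by rewrite in_cons negb_or Np Hab.
Qed.

Lemma span_dl_dim (s : seq ('I_3 * 'I_3)) : uniq s -> \dim <<map dl s>>%VS = size s.
Proof.
move=> us; suff: free (map dl s) by move/eqP => ->; rewrite size_map.
elim: s us => [|p s IH]; first by rewrite /free span_nil dimv0.
move=> /= /andP [pns us].
rewrite free_cons IH // andbT.
apply/negP => /(span_dl_mem _ _ us) /(_ p.1 p.2).
have -> : (p.1, p.2) = p by case: p {pns}.
move=> /(_ pns); rewrite /dl mxE !eqxx /=.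
by move/eqP; rewrite oner_eq0.
Qed.
End V.
Section S2.
Variable C : numClosedFieldType.
Implicit Types (x y v w a b c d : 'rV[C]_3) (mu psi phi : 'M[C]_3).

Lemma sum3E (V : zmodType) (F : 'I_3 -> V) :
  \sum_(i<3) F i = F o0 + F o1 + F o2.
Proof.
rewrite !big_ord_recl big_ord0 addr0 !addrA.
by congr (_+_+_); congr F; apply/val_inj.
Qed.

Ltac fin := rewrite /= ?summxE ?big_ord1 ?sum3E ?mxE /= ?rmorphD ?rmorphN ?rmorphM ?rmorph1 ?rmorph0
  ?conjCi ?conjC1 ?conjC0 /=; try done; try (field: (@sqrCi C)); try done.
Lemma ord3P (a : 'I_3) : a = o0 \/ a = o1 \/ a = o2.
Proof. by case: a => [[|[|[|//]]] ?]; [left|right;left|right;right]; apply/val_inj. Qed.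
Ltac c3 a := case: (ord3P a) => [->|[->|->]].

Lemma actE x v : act x v = (- (x 0 o0 * v 0 o1)) *: ev C o2.
Proof. rewrite /act /emb01 /emb10 brkE /pr10 row_mxKl !mxE; congr (_ *: _); ring. Qed.

Lemma br01E x y : br01 x y = 0.
Proof. rewrite /br01 /emb01 brkE /pr01 row_mxKr !mxE; rewrite -[RHS](scale0r (ev C o2)); congr (_ *: _); ring. Qed.

Lemma p01a x w : pr01 (brk (emb01 x) (emb10 w)) = (x 0 o1 * w 0 o0) *: ev C o2.
Proof. rewrite /emb01 /emb10 brkE /pr01 row_mxKr !mxE; congr (_ *: _); ring. Qed.

Lemma p01b w y : pr01 (brk (emb10 w) (emb01 y)) = (- (w 0 o0 * y 0 o1)) *: ev C o2.
Proof. rewrite /emb01 /emb10 brkE /pr01 row_mxKr !mxE; congr (_ *: _); ring. Qed.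

Lemma p10c w y : pr10 (brk (emb10 w) (emb10 y)) = 0.
Proof. rewrite /emb10 brkE /pr10 row_mxKl !mxE; rewrite -[RHS](scale0r (ev C o2)); congr (_ *: _); ring. Qed.

Lemma FcE (k j : 'I_3) : Fc C k j = ev C k 0 o1 * ev C j 0 o0.
Proof. rewrite /Fc /emb01 /emb10 brkE rm5 !mxE /=; ring. Qed.

Lemma ev1E mu y : ev1 mu y = \row_a (y 0 o0 * mu a o0 + y 0 o1 * mu a o1 + y 0 o2 * mu a o2).
Proof. apply/rowP => a; rewrite /ev1 !mxE sum3E !mxE. done. Qed.

Lemma dbar1E mu : dbar1 mu = - (mu o1 o1) *: delta_mx o2 o0 - mu o1 o2 *: delta_mx o2 o1.
Proof.
apply/matrixP => a k; rewrite /dbar1 /mk2 mxE !br01E !actE !ev1E /ev /pp /qq.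
c3 a; c3 k; fin.
Qed.

Lemma dbar0E v : dbar0 v = - (v 0 o1) *: delta_mx o2 o0.
Proof. apply/matrixP => a b; rewrite /dbar0 mxE actE /ev; c3 a; c3 b; fin. Qed.

Lemma dbar2E psi : dbar2 psi = - (psi o1 o2) *: ev C o2.
Proof.
rewrite /dbar2 !br01E !actE; apply/rowP => a; rewrite /ev2 /ev /pp /qq; c3 a; fin.
Qed.

Lemma dbar1starE psi : dbar1star psi = - (psi o2 o0) *: delta_mx o1 o1 - psi o2 o1 *: delta_mx o1 o2.
Proof.
apply/matrixP => a b; rewrite /dbar1star mxE /ipM dbar1E; c3 a; c3 b; fin.
Qed.

Lemma dbar2starE (chi : 'rV[C]_3) : dbar2star chi = - (chi 0 o2) *: delta_mx o1 o2.
Proof.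
apply/matrixP => a b; rewrite /dbar2star mxE /ipM dbar2E /ev; c3 a; c3 b; fin.
Qed.

Lemma lap2E psi : lap2 psi = psi o2 o0 *: delta_mx o2 o0 + psi o2 o1 *: delta_mx o2 o1 + psi o1 o2 *: delta_mx o1 o2.
Proof.
apply/matrixP => a b; rewrite /lap2 dbar1E dbar1starE dbar2E dbar2starE /ev; c3 a; c3 b; fin.
Qed.

Lemma snE phi psi : sn phi psi = \matrix_(a, k)
  (if k == o0 then psi o0 o0 * phi a o2 + phi o0 o0 * psi a o2
   else if k == o2 then - (psi o0 o2 * phi a o2 + phi o0 o2 * psi a o2) else 0).
Proof.
apply/matrixP => a k; rewrite /sn mxE !p10c !p01a !p01b !ev1E /ev /pp /qq; c3 a; c3 k; fin.
Qed.

Lemma condA_mxE mu : condA_mx mu = mu o0 o0 *: delta_mx o0 o1 - mu o0 o0 *: delta_mx o1 o0 + mu o0 o2 *: delta_mx o1 o2.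
Proof.
apply/matrixP => j k; rewrite /condA_mx mxE; c3 j; c3 k; rewrite /= ?big_mkcond ?sum3E ?FcE /ev; fin.
Qed.
End S2.
Section S3.
Variable C : numClosedFieldType.
Implicit Types (v : 'rV[C]_3) (mu psi phi : 'M[C]_3).

Ltac c3' a := case: (ord3P a) => [->|[->|->]].
Ltac simp := rewrite ?mulr0 ?mul0r ?mulr1 ?mul1r ?subr0 ?sub0r ?addr0 ?add0r ?oppr0 ?opprK.

Lemma ent {A B : 'M[C]_3} i j : A = B -> A i j = B i j. Proof. by move->. Qed.

Lemma P1 mu : dbar1 mu = 0 <-> (mu o1 o1 = 0 /\ mu o1 o2 = 0).
Proof.
rewrite dbar1E; split.
  move=> H; have H1 := ent o2 o0 H; have H2 := ent o2 o1 H.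
  move: H1 H2; rewrite !mxE /=; simp => /eqP; rewrite oppr_eq0 => /eqP -> /eqP.
  by rewrite oppr_eq0 => /eqP.
by case=> -> ->; rewrite oppr0 !scale0r subrr.
Qed.

Lemma ipM0E mu v : ipM mu (dbar0 v) = - (mu o2 o0 * (v 0 o1)^*).
Proof.
rewrite /ipM dbar0E !sum3E !mxE /=.
rewrite ?rmorphM ?rmorphN ?rmorph1 ?rmorph0 /= ?conjC1 ?conjC0.
ring.
Qed.

Lemma Pharm mu : harm_rep mu <-> (dbar1 mu = 0 /\ mu o2 o0 = 0).
Proof.
rewrite /harm_rep; split; case=> H1 H2; split => //.
  have := H2 (ev C o1); rewrite ipM0E /ev mxE /= conjC1 mulr1 => /eqP.
  by rewrite oppr_eq0 => /eqP.
by move=> v; rewrite ipM0E H2 mul0r oppr0.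
Qed.

Lemma PA mu : condA mu <-> (mu o0 o0 = 0 /\ mu o0 o2 = 0).
Proof.
rewrite /condA condA_mxE; split.
  move=> H; have H1 := ent o0 o1 H; have H2 := ent o1 o2 H.
  by move: H1 H2; rewrite !mxE /=; simp.
by case=> -> ->; rewrite !scale0r subrr addr0.
Qed.

Definition sZ : seq ('I_3 * 'I_3) := [:: (o0,o0);(o0,o1);(o0,o2);(o1,o0);(o2,o0);(o2,o1);(o2,o2)].
Definition sB : seq ('I_3 * 'I_3) := [:: (o2,o0)].
Definition sAb : seq ('I_3 * 'I_3) := [:: (o0,o1);(o1,o0);(o2,o0);(o2,o1);(o2,o2)].
Definition sK : seq ('I_3 * 'I_3) := [:: (o0,o0);(o0,o1);(o1,o0);(o2,o1);(o2,o2)].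

Lemma memZ mu : mu \in <<map (@dl C) sZ>>%VS <-> dbar1 mu = 0.
Proof.
rewrite span_dl_mem // P1; split.
  by move=> H; split; apply: H.
by case=> H1 H2 a b; c3' a; c3' b.
Qed.

Lemma memB mu : mu \in <<map (@dl C) sB>>%VS <-> exists v, mu = dbar0 v.
Proof.
rewrite span_dl_mem //; split.
  move=> H; exists ((- mu o2 o0) *: ev C o1); rewrite dbar0E.
  apply/matrixP => a b; rewrite /ev !mxE /=.
  c3' a; c3' b; rewrite /= ?mxE /=; simp; try by []; by rewrite H.
case=> v -> a b; rewrite dbar0E !mxE; c3' a; c3' b; rewrite /=; simp; by [].
Qed.

Lemma memAb mu : mu \in <<map (@dl C) sAb>>%VS <-> (dbar1 mu = 0 /\ condA mu).
Proof.
rewrite span_dl_mem // P1 PA; split.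
  by move=> H; split; split; apply: H.
by case=> [[H1 H2] [H3 H4]] a b; c3' a; c3' b.
Qed.

Lemma memK mu : mu \in <<map (@dl C) sK>>%VS <-> (harm_rep mu /\ mu o0 o2 = 0).
Proof.
rewrite span_dl_mem // Pharm P1; split.
  by move=> H; split; [split; [split|]|]; apply: H.
by case=> [[[H1 H2] H3] H4] a b; c3' a; c3' b.
Qed.
End S3.
Section S4.
Variable C : numClosedFieldType.
Local Open Scope classical_set_scope.
Implicit Types (v : 'rV[C]_3) (mu psi phi : 'M[C]_3) (G : 'M[C]_3 -> 'M[C]_3).

Ltac c3q a := case: (ord3P a) => [->|[->|->]].
Ltac simpq := rewrite ?mulr0 ?mul0r ?mulr1 ?mul1r ?subr0 ?sub0r ?addr0 ?add0r ?oppr0 ?opprK.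

Lemma ent' {A B : 'M[C]_3} i j : A = B -> A i j = B i j. Proof. by move->. Qed.

Lemma Gent G psi : green G -> (G psi) o2 o0 = psi o2 o0 /\ (G psi) o2 o1 = psi o2 o1.
Proof.
move=> /(_ psi) [_ H]; move: (ent' o2 o0 H) (ent' o2 o1 H).
rewrite !lap2E !mxE /=; simpq.
by move/eqP; rewrite subr_eq0 => /eqP <- /eqP; rewrite subr_eq0 => /eqP <-.
Qed.

Definition sumS (l : seq 'M[C]_3) : 'M[C]_3 :=
  \sum_(i < size l) sn (nth 0 l i) (nth 0 l (size l - 1 - i)).

Lemma kur_nextE G l : green G ->
  kur_next G l = (2^-1 * sumS l o2 o0) *: delta_mx o1 o1 + (2^-1 * sumS l o2 o1) *: delta_mx o1 o2.
Proof.
move=> HG; rewrite /kur_next -/(sumS l) dbar1starE.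
case: (Gent G (sumS l) HG) => -> ->.
apply/matrixP => a b; rewrite !mxE; ring.
Qed.

Lemma sumS21 l : sumS l o2 o1 = 0.
Proof. by rewrite /sumS summxE big1 // => i _; rewrite snE mxE. Qed.

Lemma sumS20 l : sumS l o2 o0 = \sum_(i < size l)
  ((nth 0 l (size l - 1 - i)) o0 o0 * (nth 0 l i) o2 o2 + (nth 0 l i) o0 o0 * (nth 0 l (size l - 1 - i)) o2 o2).
Proof. by rewrite /sumS summxE; apply: eq_bigr => i _; rewrite snE mxE. Qed.

Definition phi2 mu : 'M[C]_3 := (mu o0 o0 * mu o2 o2) *: delta_mx o1 o1.

Lemma kur2 G mu : green G -> kur G mu 2 = phi2 mu.
Proof.
move=> HG; rewrite /kur /= kur_nextE // sumS21 sumS20 big_ord1 /=.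
apply/matrixP => a b; rewrite /phi2 !mxE; by field.
Qed.

Lemma nseq_rcons (n : nat) (x : 'M[C]_3) : rcons (nseq n x) x = nseq n.+1 x.
Proof. by elim: n => //= n ->. Qed.

Lemma kursE G mu : green G -> forall n, kurs G mu n.+2 = [:: mu, phi2 mu & nseq n 0].
Proof.
move=> HG; elim=> [|n IH].
  by rewrite /= -(kur2 G mu HG).
rewrite (_ : kurs G mu n.+3 = rcons (kurs G mu n.+2) (kur_next G (kurs G mu n.+2))) // IH.
have -> : kur_next G [:: mu, phi2 mu & nseq n 0] = 0.
  rewrite kur_nextE // sumS21 sumS20 big1 ?mulr0 ?scale0r ?addr0 //.
  move=> i _.
  set l := [:: mu, phi2 mu & nseq n 0].
  have Z : forall k, k != 0%N -> (nth 0 l k) o0 o0 = 0 /\ (nth 0 l k) o2 o2 = 0.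
    case=> [//|[|k]] _ /=; first by rewrite /phi2 !mxE /=; simpq.
    by rewrite nth_nseq; case: ifP => _; rewrite !mxE.
  have Hs : size l = n.+2 by rewrite /= size_nseq.
  case: (eqVneq (i : nat) 0%N) => Hi.
    have Hx : (size l - 1 - i)%N != 0%N by rewrite Hi subn0 Hs.
    by have [-> ->] := Z _ Hx; simpq.
  by have [-> ->] := Z i Hi; simpq.
by rewrite rcons_cons rcons_cons nseq_rcons.
Qed.

Lemma kurE G mu r : green G ->
  kur G mu r = if r == 1%N then mu else if r == 2%N then phi2 mu else 0.
Proof.
move=> HG; case: r => [|[|r]]; first by rewrite /kur /=.
  by rewrite /kur.
rewrite /kur kursE //= ; case: r => [//|r] /=.
by rewrite (_ : 0 :: nseq r 0 = nseq r.+1 (0 : 'M[C]_3)) // nth_nseq; case: ifP.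
Qed.

Lemma partial G mu a b N : green G -> (3 <= N)%N ->
  \sum_(1 <= r < N) kur G mu r a b = (mu + phi2 mu) a b.
Proof.
move=> HG HN; rewrite big_ltn; last by apply: leq_trans HN.
rewrite big_ltn; last by apply: leq_trans HN.
rewrite big_nat_cond big1; last first.
  by move=> r /andP [/andP [Hr _] _]; rewrite kurE //; case: r Hr => [|[|[|r]]] //; rewrite mxE.
by rewrite !kurE // !mxE addr0.
Qed.

Lemma cvP G mu a b : green G ->
  (fun N : nat => \sum_(1 <= r < N) kur G mu r a b) @ \oo --> (mu + phi2 mu) a b.
Proof.
move=> HG; apply: cvg_near_cst; near=> N; apply: partial => //; near: N.
exact: nbhs_infty_ge.
Unshelve. all: by end_near.
Qed.

Lemma integ G mu : green G -> harm_rep mu -> (kur_integrable G mu <-> mu o0 o2 = 0).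
Proof.
move=> HG; case/Pharm => /P1 [H11 H12] H20.
have EP : forall Phi : 'M[C]_3, (forall a b, (fun N : nat => \sum_(1 <= r < N) kur G mu r a b) @ \oo --> Phi a b) -> Phi = mu + phi2 mu.
  move=> Phi HP; apply/matrixP => a b.
  exact: (norm_cvg_unique (HP a b) (cvP G mu a b HG)).
rewrite /kur_integrable; split.
  case=> Phi [/EP -> H].
  have := ent' o0 o2 H; rewrite dbar1E snE /phi2 !mxE /= ?H11 ?H12 ?H20; simpq.
  move=> E.
  have : mu o0 o2 * mu o0 o2 = 0.
    rewrite -[RHS]oppr0 -E; by field.
  by move/eqP; rewrite mulf_eq0 orbb => /eqP.
move=> H02; exists (mu + phi2 mu); split; first by move=> a b; exact: cvP.
apply/matrixP => a b; rewrite dbar1E snE /phi2 !mxE; c3q a; c3q b; rewrite /= ?H11 ?H12 ?H20 ?H02; by field.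
Qed.
End S4.
Theorem mainTheorem14 (C : numClosedFieldType) :
  (* (i) closedness, dim H^1 = 6, harmonic representatives *)
  (forall mu : 'M[C]_3, dbar1 mu = 0 <-> (mu o1 o1 = 0 /\ mu o1 o2 = 0)) /\
  (exists Z B : {vspace 'M[C]_3},
      (forall mu, mu \in Z <-> dbar1 mu = 0) /\
      (forall mu, mu \in B <-> exists v : 'rV[C]_3, mu = dbar0 v) /\
      \dim Z = (\dim B + 6)%N) /\
  (forall mu : 'M[C]_3, harm_rep mu <-> (dbar1 mu = 0 /\ mu o2 o0 = 0)) /\
  (* (ii) Condition A and the abelian deformations *)
  (forall mu : 'M[C]_3, dbar1 mu = 0 -> (condA mu <-> (mu o0 o0 = 0 /\ mu o0 o2 = 0))) /\
  (exists Ab B : {vspace 'M[C]_3},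
      (forall mu, mu \in Ab <-> (dbar1 mu = 0 /\ condA mu)) /\
      (forall mu, mu \in B <-> exists v : 'rV[C]_3, mu = dbar0 v) /\
      (B <= Ab)%VS /\ \dim Ab = (\dim B + 4)%N) /\
  (* (iii) Kuranishi series, integrability, Kuranishi space *)
  (forall G : 'M[C]_3 -> 'M[C]_3, green G ->
     (forall mu, harm_rep mu -> kur G mu 2 = (mu o0 o0 * mu o2 o2) *: delta_mx o1 o1) /\
     (exists eps : C, 0 < eps /\
        forall mu, harm_rep mu -> (forall a b, `|mu a b| < eps) ->
          (kur_integrable G mu <-> mu o0 o2 = 0))) /\
  (exists K : {vspace 'M[C]_3}, \dim K = 5%N /\
      forall mu, mu \in K <-> (harm_rep mu /\ mu o0 o2 = 0)).
Proof.
split; first by move=> mu; exact: P1.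
split.
  exists <<map (@dl C) sZ>>%VS, <<map (@dl C) sB>>%VS; split; first exact: memZ.
  by split; [exact: memB | rewrite !span_dl_dim].
split; first by move=> mu; exact: Pharm.
split; first by move=> mu _; exact: PA.
split.
  exists <<map (@dl C) sAb>>%VS, <<map (@dl C) sB>>%VS; split; first exact: memAb.
  split; first exact: memB.
  split; last by rewrite !span_dl_dim.
  apply/subvP => mu /memB [v ->]; apply/memAb; split.
    by apply/P1; rewrite dbar0E !mxE /= !mulr0.
  by apply/PA; rewrite dbar0E !mxE /= !mulr0.
split.
  move=> G HG; split; first by move=> mu _; rewrite kur2.
  exists 1; split; first exact: ltr01.
  by move=> mu Hm _; exact: integ.
exists <<map (@dl C) sK>>%VS; split; first by rewrite span_dl_dim.
exact: memK.
Qed.
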